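(* Let $P,L\in K\langle\partial_t\rangle$ be monic, with $P\in k(t)[\mathbf x,1/r]\langle\partial_t\rangle$ for some nonzero $r\in k[\mathbf x,t]$ and $L\in k(t)\langle\partial_t\rangle$. Let $\mathbf c\in k^n$ with $r(\mathbf c,t)\neq 0$. (1) If ${\rm gcrd}(P_{\mathbf x=\mathbf c},L)=1$, then ${\rm gcrd}(P,L)=1$. (2) If ${\rm gcrd}(P,L)=1$, then there exists $\mathbf a\in k^n$ with $r(\mathbf a,t)\neq 0$ and ${\rm gcrd}(P_{\mathbf x=\mathbf a},L)=1$.
   Context: $k$ is an algebraically closed field of characteristic zero, $\mathbf x=(x_1,\dots,x_n)$, $K=k(t,x_1,\dots,x_n)$, and $K\langle\partial_t\rangle$ is the ring of linear differential operators in $\partial_t=\partial/\partial t$ with coefficients in $K$; $k(t)[\mathbf x,1/r]\langle\partial_t\rangle$ denotes those operators whose coefficients lie in the subring $k(t)[\mathbf x,1/r]$ of $K$. For such an operator $P$ and $\mathbf c\in k^n$ with $r(\mathbf c,t)\neq0$, $P_{\mathbf x=\mathbf c}\in k(t)\langle\partial_t\rangle$ denotes the operator obtained by substituting $x_i=c_i$ in all coefficients. ${\rm gcrd}(P,L)$ denotes the monic greatest common right divisor of $P$ and $L$ in $K\langle\partial_t\rangle$. *)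

(* Defs.v *)
From HB Require Import structures.
From mathcomp Require Import all_boot all_order all_algebra.
From mathcomp Require Import fraction generic_quotient mpoly.
Set Implicit Arguments. Unset Strict Implicit. Unset Printing Implicit Defensive.
Import GRing.Theory.
Local Open Scope ring_scope.
Local Notation "x %:F" := (@FracField.tofrac _ x).

(* An operator sum_i a_i D^i over a field F with derivation delta is stored as the *)
(* coefficient polynomial  sum_i a_i 'X^i : {poly F}  (coefficients on the left).  *)
Section DiffOp.
Variable F : fieldType.
Variable delta : F -> F.

(* D * Q  = sum_j (q_j D^(j+1) + delta(q_j) D^j) *)
Definition dX (Q : {poly F}) : {poly F} := 'X * Q + map_poly delta Q.

(* noncommutative product P * Q = sum_i p_i (D^i * Q) *)
Definition dmul (P Q : {poly F}) : {poly F} :=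
  \sum_(i < size P) P`_i *: iter i dX Q.

Definition rdvd (Q P : {poly F}) : Prop := exists A : {poly F}, P = dmul A Q.

Definition gcrd_one (P L : {poly F}) : Prop :=
  forall Q : {poly F}, rdvd Q P -> rdvd Q L -> (size Q <= 1)%N.
End DiffOp.

Definition fder (R : idomainType) (f : {fraction {poly R}}) : {fraction {poly R}} :=
  let p := repr f in
  ((deriv (p.1) * p.2 - p.1 * deriv (p.2))%:F) / ((p.2 ^+ 2)%:F).

Section Fields.
Variables (k : fieldType) (n : nat).

(* k[x][t] (t is the polynomial variable), k(t), K = k(t, x) *)
Definition kxt := {poly {mpoly k[n]}}.
Definition kt := {fraction {poly k}}.
Definition bigK := {fraction {poly {mpoly k[n]}}}.

Definition liftkt (q : {poly k}) : {poly {mpoly k[n]}} :=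
  map_poly (fun a : k => a%:MP_[n]) q.

Definition kt_to_K (f : {fraction {poly k}}) : {fraction {poly {mpoly k[n]}}} :=
  let p := repr f in (liftkt p.1)%:F / (liftkt p.2)%:F.

Definition evalx (c : 'I_n -> k) (p : {poly {mpoly k[n]}}) : {poly k} :=
  map_poly (fun m : {mpoly k[n]} => m.@[c]) p.

(* An element of k(t)[x, 1/r] is written p / (r^m q(t)) with p in k[x][t],
   m in nat, q in k[t] nonzero; such a datum is a triple ((p, m), q). *)
Definition coefK (r : {poly {mpoly k[n]}}) (e : {poly {mpoly k[n]}} * nat * {poly k})
  : {fraction {poly {mpoly k[n]}}} :=
  (e.1.1)%:F / ((r ^+ e.1.2 * liftkt e.2)%:F).

Definition coefKt (r : {poly {mpoly k[n]}}) (c : 'I_n -> k)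
  (e : {poly {mpoly k[n]}} * nat * {poly k}) : {fraction {poly k}} :=
  (evalx c e.1.1)%:F / ((evalx c r ^+ e.1.2 * e.2)%:F).

(* the operator P = sum_i s_i D^i in k(t)[x,1/r]<D> and its specialization P_{x=c} *)
Definition opK r (s : seq ({poly {mpoly k[n]}} * nat * {poly k}))
  : {poly {fraction {poly {mpoly k[n]}}}} := Poly (map (coefK r) s).
Definition opKt r c (s : seq ({poly {mpoly k[n]}} * nat * {poly k}))
  : {poly {fraction {poly k}}} := Poly (map (coefKt r c) s).
End Fields.

(* Main.v *)
Require Import Defs.
From HB Require Import structures.
From mathcomp Require Import all_boot all_order all_algebra.
From mathcomp Require Import mpoly.
From mathcomp Require Import fraction generic_quotient zify ring.
From Stdlib Require Import ClassicalEpsilon.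
Import GRing.Theory.
Local Open Scope ring_scope.

Module Aux.
Set Implicit Arguments. Unset Strict Implicit. Unset Printing Implicit Defensive.
Local Open Scope quotient_scope.
Local Notation "x %:F" := (@FracField.tofrac _ x).
Local Notation coefK := Defs.coefK.


Lemma size_sub_lead (F : fieldType) (p q : {poly F}) :
  (0 < size p)%N -> size p = size q -> lead_coef p = lead_coef q ->
  (size (p - q)%R < size p)%N.
Proof.
move=> hp hs hl.
have : (size (p - q)%R <= (size p).-1)%N.
  apply/leq_sizeP => j hj; rewrite coefB.
  have [->|hne] := eqVneq j (size p).-1.
    by rewrite -lead_coefE hs -lead_coefE hl subrr.
  have hj' : (size p <= j)%N by rewrite -(prednK hp) ltn_neqAle eq_sym hne hj.
  by rewrite !nth_default ?subrr // -hs.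
by case: (size p) hp => // k _.
Qed.

Section Ore.
Variables (F : fieldType) (delta : F -> F).
Hypothesis dD : forall x y, delta (x + y) = delta x + delta y.
Hypothesis dM : forall x y, delta (x * y) = delta x * y + x * delta y.

Local Notation dX := (dX delta).
Local Notation dmul := (dmul delta).
Implicit Types (A B C P Q L R p q U V : {poly F}).

Lemma d0 : delta 0 = 0.
Proof. have h := dD 0 0; rewrite addr0 in h; apply: (addrI (delta 0)); by rewrite addr0 -h. Qed.

Lemma coef_md p i : (map_poly delta p)`_i = delta p`_i.
Proof. by rewrite coef_map_id0 // d0. Qed.

Lemma size_md p : (size (map_poly delta p) <= size p)%N.
Proof. by apply/leq_sizeP => j hj; rewrite coef_md nth_default // d0. Qed.

Lemma coef_dX p i : (dX p)`_i = (if i == 0%N then 0 else p`_i.-1) + delta p`_i.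
Proof. by rewrite /Defs.dX coefD coefXM coef_md. Qed.

Lemma dX_add p q : dX (p + q) = dX p + dX q.
Proof.
apply/polyP=> i; rewrite coefD !coef_dX !coefD dD.
by case: (i == 0%N); rewrite ?addr0 ?add0r // addrACA.
Qed.

Lemma dX0 : dX 0 = 0.
Proof. by apply/polyP=> i; rewrite coef_dX !coef0 d0; case: (i == 0%N); rewrite addr0. Qed.

Lemma dX_opp p : dX (- p) = - dX p.
Proof. by apply/eqP; rewrite -addr_eq0 -dX_add addNr dX0. Qed.

Lemma dX_scale a p : dX (a *: p) = a *: dX p + delta a *: p.
Proof.
apply/polyP=> i; rewrite coef_dX [RHS]coefD [in RHS]coefZ [in RHS]coefZ coef_dX !coefZ dM.
case: (i == 0%N); rewrite ?mulr0 ?add0r ?coefZ; first by rewrite addrC.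
by rewrite mulrDr -addrA (addrC (delta a * _)).
Qed.

Lemma iter_dX_add i p q : iter i dX (p + q) = iter i dX p + iter i dX q.
Proof. by elim: i => //= i ->; rewrite dX_add. Qed.

Lemma iter_dX0 i : iter i dX 0 = 0.
Proof. by elim: i => //= i ->; rewrite dX0. Qed.

Lemma iter_dX_opp i p : iter i dX (- p) = - iter i dX p.
Proof. by elim: i => //= i ->; rewrite dX_opp. Qed.

Lemma size_dX p : p != 0 -> size (dX p) = (size p).+1 /\ lead_coef (dX p) = lead_coef p.
Proof.
move=> hp; rewrite /Defs.dX mulrC.
have hs : (size (map_poly delta p) < size (p * 'X)%R)%N.
  by rewrite size_mulX // ltnS size_md.
by rewrite size_polyDl // lead_coefDl // size_mulX // lead_coefMX.
Qed.

Lemma size_iter i p : p != 0 ->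
  size (iter i dX p) = (size p + i)%N /\ lead_coef (iter i dX p) = lead_coef p.
Proof.
move=> hp; elim: i => [|i [IHs IHl]] /=; first by rewrite addn0.
have hne : iter i dX p != 0.
  by rewrite -size_poly_gt0 IHs addn_gt0 size_poly_gt0 hp.
by have [-> ->] := size_dX hne; rewrite IHs IHl addnS.
Qed.

Lemma size_iter_le i p : (size (iter i dX p) <= size p + i)%N.
Proof.
have [->|hp] := eqVneq p 0; first by rewrite iter_dX0 size_poly0.
by rewrite (size_iter i hp).1.
Qed.

Lemma dmulE N A Q : (size A <= N)%N ->
  dmul A Q = \sum_(i < N) A`_i *: iter i dX Q.
Proof.
move=> hN; rewrite /Defs.dmul (big_ord_widen N (fun i => A`_i *: iter i dX Q)) //.
rewrite big_mkcond; apply: eq_bigr => i _; case: ltnP => // h.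
by rewrite nth_default // scale0r.
Qed.

Lemma dmul0l Q : dmul 0 Q = 0.
Proof. by rewrite /Defs.dmul size_poly0 big_ord0. Qed.

Lemma dmulDl A B Q : dmul (A + B) Q = dmul A Q + dmul B Q.
Proof.
pose N := maxn (size A) (size B).
rewrite (dmulE _ (size_polyD A B)) (@dmulE N A) ?leq_maxl // (@dmulE N B) ?leq_maxr //.
by rewrite -big_split; apply: eq_bigr => i _; rewrite coefD scalerDl.
Qed.

Lemma dmulZl a A Q : dmul (a *: A) Q = a *: dmul A Q.
Proof.
rewrite (dmulE _ (size_scale_leq a A)) /Defs.dmul scaler_sumr.
by apply: eq_bigr => i _; rewrite coefZ scalerA.
Qed.

Lemma dmulNl A Q : dmul (- A) Q = - dmul A Q.
Proof. by rewrite -scaleN1r dmulZl scaleN1r. Qed.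

Lemma dmul_suml (I : Type) (r : seq I) (P : pred I) (G : I -> {poly F}) Q :
  dmul (\sum_(i <- r | P i) G i) Q = \sum_(i <- r | P i) dmul (G i) Q.
Proof. exact: (big_morph (fun A => dmul A Q) (fun x y => dmulDl x y Q) (dmul0l Q)). Qed.

Lemma dmulDr A Q1 Q2 : dmul A (Q1 + Q2) = dmul A Q1 + dmul A Q2.
Proof.
by rewrite /Defs.dmul -big_split; apply: eq_bigr => i _; rewrite iter_dX_add scalerDr.
Qed.

Lemma dmul0r A : dmul A 0 = 0.
Proof. by rewrite /Defs.dmul big1 // => i _; rewrite iter_dX0 scaler0. Qed.

Lemma dmulNr A Q : dmul A (- Q) = - dmul A Q.
Proof. by apply/eqP; rewrite -addr_eq0 -dmulDr addNr dmul0r. Qed.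

Lemma dmulXn a i Q : dmul (a *: 'X^i) Q = a *: iter i dX Q.
Proof.
have hs : (size (a *: 'X^i : {poly F}) <= i.+1)%N.
  by apply: leq_trans (size_scale_leq _ _) _; rewrite size_polyXn.
rewrite (dmulE _ hs) big_ord_recr /= big1 ?add0r.
  by rewrite coefZ coefXn eqxx mulr1.
by move=> j _; rewrite coefZ coefXn (ltn_eqF (ltn_ord j)) mulr0 scale0r.
Qed.

Lemma dmul1 Q : dmul 1 Q = Q.
Proof. by rewrite -(scale1r (1 : {poly F})) -(expr0 'X) dmulXn scale1r. Qed.

Lemma dX_sum (I : Type) (r : seq I) (P : pred I) (G : I -> {poly F}) :
  dX (\sum_(i <- r | P i) G i) = \sum_(i <- r | P i) dX (G i).
Proof. exact: (big_morph dX dX_add dX0). Qed.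

Lemma dmul_dX B C : dmul (dX B) C = dX (dmul B C).
Proof.
rewrite {1}/Defs.dX dmulDl.
have h1 : dmul ('X * B) C = \sum_(i < size B) B`_i *: iter i.+1 dX C.
  have hs : (size ('X * B)%R <= (size B).+1)%N.
    have [->|hB] := eqVneq B 0; first by rewrite mulr0 size_poly0.
    by rewrite mulrC size_mulX.
  rewrite (dmulE _ hs) big_ord_recl /= coefXM eqxx scale0r add0r.
  by apply: eq_bigr => i _; rewrite coefXM /=.
have h2 : dmul (map_poly delta B) C = \sum_(i < size B) delta B`_i *: iter i dX C.
  by rewrite (dmulE _ (size_md B)); apply: eq_bigr => i _; rewrite coef_md.
rewrite h1 h2 /Defs.dmul dX_sum -big_split; apply: eq_bigr => i _.
by rewrite dX_scale.
Qed.

Lemma dmul_iter i B C : dmul (iter i dX B) C = iter i dX (dmul B C).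
Proof. by elim: i => //= i <-; rewrite dmul_dX. Qed.

Lemma dmulA A B C : dmul (dmul A B) C = dmul A (dmul B C).
Proof.
rewrite [dmul A B]/Defs.dmul dmul_suml [RHS]/Defs.dmul; apply: eq_bigr => i _.
by rewrite dmulZl dmul_iter.
Qed.

Lemma size_dmul_le A B : (size (dmul A B) <= (size A + size B).-1)%N.
Proof.
rewrite /Defs.dmul; apply: (big_ind (fun p => size p <= (size A + size B).-1)%N).
- by rewrite size_poly0.
- by move=> x y hx hy; apply: leq_trans (size_polyD _ _) _; rewrite geq_max hx hy.
move=> i _; apply: leq_trans (size_scale_leq _ _) _.
apply: leq_trans (size_iter_le _ _) _.
have := ltn_ord i; lia.
Qed.

Lemma size_dmul A B : A != 0 -> B != 0 ->
  size (dmul A B) = (size A + size B).-1.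
Proof.
move=> hA hB; rewrite /Defs.dmul.
have hA0 : (0 < size A)%N by rewrite size_poly_gt0.
have hl : A`_(size A).-1 != 0 by rewrite -lead_coefE lead_coef_eq0.
set m := (size A).-1 in hl *.
have hsA : size A = m.+1 by rewrite /m prednK.
rewrite hsA big_ord_recr /=.
have [hs _] := size_iter m hB.
rewrite (addrC (\sum_(i < m) _)) size_polyDl size_scale // hs.
  by rewrite addnC.
apply: (big_ind (fun p => size p < size B + m)%N).
- by rewrite size_poly0 addn_gt0 size_poly_gt0 hB.
- by move=> x y hx hy; apply: leq_ltn_trans (size_polyD _ _) _; rewrite gtn_max hx hy.
move=> i _; apply: leq_ltn_trans (size_scale_leq _ _) _.
by apply: leq_ltn_trans (size_iter_le _ _) _; rewrite ltn_add2l.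
Qed.

Lemma dmul_eq0 A B : dmul A B = 0 -> A = 0 \/ B = 0.
Proof.
move=> h; have [->|hA] := eqVneq A 0; first by left.
have [->|hB] := eqVneq B 0; first by right.
move: (size_dmul hA hB); rewrite h size_poly0.
move: hA hB; rewrite -!size_poly_gt0; lia.
Qed.

Lemma rdiv L P : L != 0 -> exists Q R, P = dmul Q L + R /\ (size R < size L)%N.
Proof.
move=> hL; have [N] := ubnP (size P); elim: N P => // N IH P /ltnSE hP.
have [hlt|hge] := ltnP (size P) (size L).
  by exists 0, P; rewrite dmul0l add0r.
have hP0 : P != 0.
  by rewrite -size_poly_gt0; apply: leq_trans hge; rewrite size_poly_gt0.
pose d := (size P - size L)%N.
pose c := lead_coef P / lead_coef L.
have hc : c != 0 by rewrite mulf_neq0 ?invr_eq0 ?lead_coef_eq0.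
have [hs hl] := size_iter d hL.
have hX : size (c *: iter d dX L) = size P /\ lead_coef (c *: iter d dX L) = lead_coef P.
  rewrite size_scale // hs lead_coefZ hl /c divfK ?lead_coef_eq0 //.
  by rewrite /d subnKC.
have hlt : (size (P - c *: iter d dX L)%R < size P)%N.
  by case: hX => h1 h2; apply: size_sub_lead; rewrite ?h1 ?h2 // size_poly_gt0.
have [Q1 [R [h1 h2]]] := IH _ (leq_trans hlt hP).
exists (Q1 + c *: 'X^d), R; split => //.
by rewrite dmulDl dmulXn addrAC -h1 subrK.
Qed.

Lemma descent P L A B : P != 0 -> L != 0 -> A != 0 -> B != 0 ->
  (size A < size L)%N -> (size B < size P)%N ->
  dmul A P + dmul B L = 0 ->
  exists Q, (1 < size Q)%N /\ rdvd delta Q P /\ rdvd delta Q L.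
Proof.
have [N] := ubnP (size P + size L)%N.
elim: N P L A B => // N IH P L A B /ltnSE hN hP hL hA hB hAL hBP hrel.
wlog hLP : P L A B hN hP hL hA hB hAL hBP hrel / (size L <= size P)%N.
  move=> hw; case: (leqP (size L) (size P)) => h; first exact: (hw P L A B hN hP hL hA hB hAL hBP hrel h).
  have hN' : (size L + size P <= N)%N by rewrite addnC.
  have hrel' : dmul B L + dmul A P = 0 by rewrite addrC.
  have [Q [h1 [h2 h3]]] := hw L P B A hN' hL hP hB hA hBP hAL hrel' (ltnW h).
  by exists Q.
have [Q0 [R [hPd hR]]] := rdiv P hL.
have hrel2 : dmul A R + dmul (dmul A Q0 + B) L = 0.
  by rewrite dmulDl dmulA addrA -dmulDr (addrC R) -hPd.
have [hRe|hR0] := eqVneq R 0.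
  exists L; split; last split.
  - by apply: leq_trans _ hAL; rewrite ltnS size_poly_gt0.
  - by exists Q0; rewrite hPd hRe addr0.
  - by exists 1; rewrite dmul1.
have hAQB : dmul A Q0 + B != 0.
  apply/eqP => h; move: hrel2; rewrite h dmul0l addr0 => /dmul_eq0 [] /eqP.
    by rewrite (negPf hA).
  by rewrite (negPf hR0).
have [G [hG [[R1 hR1] [L1 hL1]]]] :
    exists Q, (1 < size Q)%N /\ rdvd delta Q R /\ rdvd delta Q L.
  apply: (IH R L A (dmul A Q0 + B)) => //.
  - by apply: leq_trans hN; rewrite ltn_add2r (leq_trans hR).
  - have e1 := size_dmul hA hR0; have e2 := size_dmul hAQB hL.
    have e3 : size (dmul A R) = size (dmul (dmul A Q0 + B) L).
      by move/eqP: hrel2; rewrite addr_eq0 => /eqP ->; rewrite size_opp.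
    move: hA hR0 hL; rewrite -!size_poly_gt0; lia.
exists G; split => //; split; last by exists L1.
by exists (dmul Q0 L1 + R1); rewrite dmulDl dmulA -hL1 -hR1.
Qed.

Definition polyrow k (u : 'rV[F]_k) : {poly F} := \sum_(i < k) u 0 i *: 'X^i.

Definition blk A B k l N : 'M[F]_(k + l, N) :=
  col_mx (\matrix_(i < k, j < N) (iter i dX A)`_j)
         (\matrix_(i < l, j < N) (iter i dX B)`_j).

Lemma size_polyrow k (u : 'rV[F]_k) : (size (polyrow u) <= k)%N.
Proof.
rewrite /polyrow; apply: (big_ind (fun p => size p <= k)%N).
- by rewrite size_poly0.
- by move=> x y hx hy; apply: leq_trans (size_polyD _ _) _; rewrite geq_max hx hy.
move=> i _; apply: leq_trans (size_scale_leq _ _) _.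
by rewrite size_polyXn ltn_ord.
Qed.

Lemma coef_polyrow k (u : 'rV[F]_k) (j : 'I_k) : (polyrow u)`_j = u 0 j.
Proof.
rewrite /polyrow coef_sum (bigD1 j) //= coefZ coefXn eqxx mulr1 big1 ?addr0 //.
move=> i hi; rewrite coefZ coefXn.
have -> : (nat_of_ord j == nat_of_ord i) = false by apply/negbTE; rewrite eq_sym.
by rewrite mulr0.
Qed.

Lemma polyrow_eq0 k (u : 'rV[F]_k) : polyrow u = 0 -> u = 0.
Proof. by move=> h; apply/rowP => j; rewrite mxE -coef_polyrow h coef0. Qed.

Lemma polyrow0 k : polyrow (0 : 'rV[F]_k) = 0.
Proof. by rewrite /polyrow big1 // => i _; rewrite mxE scale0r. Qed.

Lemma polyrowK k U : (size U <= k)%N -> polyrow (\row_(i < k) U`_i) = U.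
Proof.
move=> hU; apply/polyP => j; case: (ltnP j k) => hj.
  by rewrite (coef_polyrow _ (Ordinal hj)) mxE.
rewrite !nth_default //; first exact: leq_trans hU hj.
exact: leq_trans (size_polyrow _) hj.
Qed.

Lemma dmul_polyrow k (u : 'rV[F]_k) A :
  dmul (polyrow u) A = \sum_(i < k) u 0 i *: iter i dX A.
Proof. by rewrite /polyrow dmul_suml //; apply: eq_bigr => i _; rewrite dmulXn. Qed.

Lemma blk_mul A B k l N (u : 'rV[F]_k) (v : 'rV[F]_l) (j : 'I_N) :
  (row_mx u v *m blk A B k l N) 0 j = (dmul (polyrow u) A + dmul (polyrow v) B)`_j.
Proof.
rewrite mul_row_col mxE coefD !dmul_polyrow !coef_sum !mxE.
by congr (_ + _); apply: eq_bigr => i _; rewrite mxE coefZ.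
Qed.

Lemma ker_of_mx A B k l N (w : 'rV[F]_(k + l)) :
  w != 0 -> w *m blk A B k l N = 0 ->
  ((size A + k).-1 <= N)%N -> ((size B + l).-1 <= N)%N ->
  exists U V, (U != 0 \/ V != 0) /\ (size U <= k)%N /\ (size V <= l)%N /\
     dmul U A + dmul V B = 0.
Proof.
move=> hw hwM hA hB.
exists (polyrow (lsubmx w)), (polyrow (rsubmx w)); split; last split; last split.
- have [h1|h1] := eqVneq (polyrow (lsubmx w)) 0; last by left.
  right; apply/negP => /eqP h2; move/negP: hw; apply; apply/eqP.
  by rewrite -[w]hsubmxK (polyrow_eq0 h1) (polyrow_eq0 h2) row_mx0.
- exact: size_polyrow.
- exact: size_polyrow.
apply/polyP => j; rewrite coef0; case: (ltnP j N) => hj.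
  by rewrite -(blk_mul _ _ _ _ (Ordinal hj)) hsubmxK hwM mxE.
apply: nth_default; apply: leq_trans (size_polyD _ _) _; rewrite geq_max.
apply/andP; split; apply: leq_trans (size_dmul_le _ _) _.
- by have := size_polyrow (lsubmx w); lia.
- by have := size_polyrow (rsubmx w); lia.
Qed.

Lemma mx_of_ker A B k l N U V :
  (U != 0 \/ V != 0) -> (size U <= k)%N -> (size V <= l)%N ->
  dmul U A + dmul V B = 0 ->
  exists2 w : 'rV[F]_(k + l), w != 0 & w *m blk A B k l N = 0.
Proof.
move=> hUV hU hV hrel.
exists (row_mx (\row_(i < k) U`_i) (\row_(i < l) V`_i)).
  rewrite row_mx_eq0; apply/negP => /andP[/eqP h1 /eqP h2].
  have e1 := polyrowK hU; have e2 := polyrowK hV.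
  rewrite h1 polyrow0 in e1; rewrite h2 polyrow0 in e2.
  by case: hUV; rewrite -?e1 -?e2 eqxx.
apply/rowP => j; rewrite blk_mul (polyrowK hU) (polyrowK hV) hrel coef0.
by rewrite mxE.
Qed.

Lemma crd_ker P L Q A1 B1 : P != 0 -> L != 0 -> (1 < size Q)%N ->
  P = dmul A1 Q -> L = dmul B1 Q ->
  exists U V, (U != 0 \/ V != 0) /\ (size U <= (size L).-1)%N /\
    (size V <= (size P).-1)%N /\ dmul U P + dmul V L = 0.
Proof.
move=> hP hL hQ hPA hLB.
have hQ0 : Q != 0 by rewrite -size_poly_gt0 ltnW.
have hA1 : A1 != 0 by apply: contraNneq hP => h; rewrite hPA h dmul0l.
have hB1 : B1 != 0 by apply: contraNneq hL => h; rewrite hLB h dmul0l.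
have ha := size_poly_gt0 A1; have hb := size_poly_gt0 B1.
rewrite hA1 in ha; rewrite hB1 in hb.
pose T := blk A1 B1 (size B1) (size A1) (size A1 + size B1).-1.
have hT : ~~ row_free T.
  rewrite /row_free; apply/negP => /eqP h.
  have := rank_leq_col T; rewrite h; lia.
move: hT; rewrite -kermx_eq0 => /rowV0Pn [v /sub_kermxP hv hv0].
have [U [V [hUV [hU [hV hrel]]]]] := ker_of_mx hv0 hv (leqnn _)
  (eq_leq (congr1 predn (addnC _ _))).
exists U, V; split => //; split; last split.
- by rewrite hLB (size_dmul hB1 hQ0); lia.
- by rewrite hPA (size_dmul hA1 hQ0); lia.
by rewrite hPA hLB -!dmulA -dmulDl // hrel dmul0l.
Qed.

Lemma gcrd_det P L m l : size P = m.+1 -> size L = l.+1 ->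
  (gcrd_one delta P L <-> \det (blk P L l m (l + m)) != 0).
Proof.
move=> hsP hsL.
have hP : P != 0 by rewrite -size_poly_gt0 hsP.
have hL : L != 0 by rewrite -size_poly_gt0 hsL.
split.
  move=> hg; apply/negP => /det0P [w hw0 hw].
  have [U [V [hUV [hU [hV hrel]]]]] := ker_of_mx hw0 hw
    (eq_leq (etrans (congr1 (fun x => (x + l).-1)%N hsP) (addnC _ _)))
    (eq_leq (congr1 (fun x => (x + m).-1)%N hsL)).
  have hU0 : U != 0.
    apply/negP => /eqP hU0; move: hrel; rewrite hU0 dmul0l add0r => /dmul_eq0 [hV0|].
      by case: hUV; rewrite ?hU0 ?hV0 eqxx.
    by move/eqP; rewrite (negPf hL).
  have hV0 : V != 0.
    apply/negP => /eqP hV0; move: hrel; rewrite hV0 dmul0l addr0 => /dmul_eq0 [].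
      by move/eqP; rewrite (negPf hU0).
    by move/eqP; rewrite (negPf hP).
  have [Q [hQ [hQP hQL]]] := descent hP hL hU0 hV0
    (leq_ltn_trans hU (eq_leq (esym hsL))) (leq_ltn_trans hV (eq_leq (esym hsP))) hrel.
  by have := hg Q hQP hQL; rewrite leqNgt hQ.
move=> hd Q [A1 hA1] [B1 hB1]; rewrite leqNgt; apply/negP => hQ.
have [U [V [hUV [hU [hV hrel]]]]] := crd_ker hP hL hQ hA1 hB1.
rewrite hsL in hU; rewrite hsP in hV.
have [w hw0 hw] := @mx_of_ker P L l m (l + m)%N U V hUV hU hV hrel.
by move/negP: hd; apply; apply/det0P; exists w.
Qed.

End Ore.


Lemma frac_repr (R : idomainType) (f : {fraction R}) :
  f = (repr f).1%:F / (repr f).2%:F.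
Proof.
have d0 : (repr f).2 != 0 by case: (repr f).
have d0F : (repr f).2%:F != 0 by rewrite tofrac_eq0.
apply: (mulIf d0F); rewrite divfK //.
have fE : f = \pi_{fraction R} (repr f) by rewrite reprK.
move: (repr f) fE d0 d0F => x -> d0 d0F.
unlock FracField.tofrac.
rewrite /GRing.mul /= !piE.
apply/eqmodP; rewrite /= FracField.equivfE /= !numden_Ratio ?mulr1 ?oner_eq0 ?mul1r ?mulr1 //.
by rewrite mulrC.
Qed.

Lemma frac_repr_den (R : idomainType) (f : {fraction R}) : (repr f).2 != 0.
Proof. by case: (repr f). Qed.

Lemma frac_cross (R : idomainType) (a b c d : R) : b != 0 -> d != 0 ->
  a%:F / b%:F = c%:F / d%:F -> a * d = c * b.
Proof.
move=> hb hd h; apply/eqP; rewrite -tofrac_eq !tofracM.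
have hbF : b%:F != 0 by rewrite tofrac_eq0.
have hdF : d%:F != 0 by rewrite tofrac_eq0.
have -> : a%:F = c%:F / d%:F * b%:F by rewrite -h divfK.
by rewrite mulrAC divfK.
Qed.

Lemma frac_eq (R : idomainType) (a b c d : R) : b != 0 -> d != 0 ->
  a * d = c * b -> a%:F / b%:F = c%:F / d%:F.
Proof.
move=> hb hd h.
have hbF : b%:F != 0 by rewrite tofrac_eq0.
have hdF : d%:F != 0 by rewrite tofrac_eq0.
apply: (mulIf hbF); apply: (mulIf hdF).
rewrite divfK // mulrAC divfK // -!tofracM h.
by [].
Qed.

Section FDer.
Variable R : idomainType.
Implicit Types (a b c d p q : {poly R}).

Lemma fder_eq a b c d : b != 0 -> d != 0 -> a * d = c * b ->
  (a^`() * b - a * b^`())%:F / (b ^+ 2)%:F = (c^`() * d - c * d^`())%:F / (d ^+ 2)%:F.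
Proof.
move=> hb hd h; apply: frac_eq; rewrite ?expf_neq0 //.
have hd' : a^`() * d + a * d^`() = c^`() * b + c * b^`() by rewrite -!derivM h.
apply/eqP; rewrite -subr_eq0.
have -> : (a^`() * b - a * b^`()) * d ^+ 2 - (c^`() * d - c * d^`()) * b ^+ 2 =
   b * d * ((a^`() * d + a * d^`()) - (c^`() * b + c * b^`()))
   - (b^`() * d + b * d^`()) * (a * d - c * b) by ring.
by rewrite hd' h; apply/eqP; ring.
Qed.

Lemma fderE p q : q != 0 ->
  fder (p%:F / q%:F) = (p^`() * q - p * q^`())%:F / (q ^+ 2)%:F.
Proof.
move=> hq; rewrite /fder.
have hx := frac_repr (p%:F / q%:F).
have hx2 := frac_repr_den (p%:F / q%:F).
move: (repr (p%:F / q%:F)) hx hx2 => x hx hx2.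
apply: fder_eq => //; apply: frac_cross => //; by rewrite -hx.
Qed.

Lemma fderD (x y : {fraction {poly R}}) : fder (x + y) = fder x + fder y.
Proof.
rewrite [x]frac_repr [y]frac_repr.
have hb := frac_repr_den x; have hd := frac_repr_den y.
move: (repr x) (repr y) hb hd => [[a b] /= _] [[c d] /= _] hb hd.
have nz (p : {poly R}) : p != 0 -> p%:F != 0 by rewrite tofrac_eq0.
rewrite addf_div ?nz // -!tofracM -tofracD !fderE ?mulf_neq0 //.
rewrite addf_div ?nz ?expf_neq0 // -!tofracM -tofracD.
apply: frac_eq; rewrite ?mulf_neq0 ?expf_neq0 //.
rewrite derivD !derivM; ring.
Qed.

Lemma fderM (x y : {fraction {poly R}}) : fder (x * y) = fder x * y + x * fder y.
Proof.
rewrite [x]frac_repr [y]frac_repr.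
have hb := frac_repr_den x; have hd := frac_repr_den y.
move: (repr x) (repr y) hb hd => [[a b] /= _] [[c d] /= _] hb hd.
have nz (p : {poly R}) : p != 0 -> p%:F != 0 by rewrite tofrac_eq0.
rewrite mulf_div -!tofracM !fderE ?mulf_neq0 //.
rewrite !mulf_div -!tofracM addf_div ?nz ?mulf_neq0 ?expf_neq0 // -!tofracM -tofracD.
apply: frac_eq; rewrite ?mulf_neq0 ?expf_neq0 //.
rewrite !derivM; ring.
Qed.

End FDer.


Section Spec.
Variables (k : fieldType) (n : nat) (r : {poly {mpoly k[n]}}).
Hypothesis hr : r != 0.
Local Notation A := {poly {mpoly k[n]}}.
Local Notation K := {fraction {poly {mpoly k[n]}}}.
Local Notation kt := {fraction {poly k}}.
Local Notation E := (A * nat * {poly k})%type.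
Implicit Types (c : 'I_n -> k) (q : {poly k}).

Lemma evalxE c (p : A) : evalx c p = map_poly (meval c) p.
Proof. by []. Qed.

Lemma liftktE (q : {poly k}) : liftkt n q = map_poly (@mpolyC n k) q.
Proof. by []. Qed.

Lemma evalx_lift c q : evalx c (liftkt n q) = q.
Proof.
apply/polyP => i; rewrite evalxE liftktE !coef_map_id0 ?mevalC //.
Qed.

Lemma liftM q1 q2 : liftkt n (q1 * q2) = liftkt n q1 * liftkt n q2.
Proof. by rewrite !liftktE rmorphM. Qed.
Lemma lift1 : liftkt n (1 : {poly k}) = 1.
Proof. by rewrite !liftktE rmorph1. Qed.
Lemma evalxM c (p q : A) : evalx c (p * q) = evalx c p * evalx c q.
Proof. by rewrite !evalxE rmorphM. Qed.
Lemma evalxD c (p q : A) : evalx c (p + q) = evalx c p + evalx c q.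
Proof. by rewrite !evalxE rmorphD. Qed.
Lemma evalxB c (p q : A) : evalx c (p - q) = evalx c p - evalx c q.
Proof. by rewrite !evalxE rmorphB. Qed.
Lemma evalxN c (p : A) : evalx c (- p) = - evalx c p.
Proof. by rewrite !evalxE rmorphN. Qed.
Lemma evalxX c (p : A) m : evalx c (p ^+ m) = evalx c p ^+ m.
Proof. by rewrite !evalxE rmorphXn. Qed.
Lemma evalx0 c : evalx c (0 : A) = 0.
Proof. by rewrite !evalxE rmorph0. Qed.
Lemma evalx1 c : evalx c (1 : A) = 1.
Proof. by rewrite !evalxE rmorph1. Qed.
Lemma evalx_deriv c (p : A) : evalx c p^`() = (evalx c p)^`().
Proof. by rewrite !evalxE deriv_map. Qed.

Lemma lift_neq0 q : q != 0 -> liftkt n q != 0.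
Proof.
move=> hq; apply/negP => /eqP h; move: (evalx_lift (fun _ => 0) q).
by rewrite h evalxE rmorph0 => /esym/eqP; rewrite (negPf hq).
Qed.

Lemma den_neq0 (e : E) : e.2 != 0 -> r ^+ e.1.2 * liftkt n e.2 != 0.
Proof. by move=> h; rewrite mulf_neq0 ?expf_neq0 ?lift_neq0. Qed.

Lemma dent_neq0 c (e : E) : evalx c r != 0 -> e.2 != 0 -> evalx c r ^+ e.1.2 * e.2 != 0.
Proof. by move=> hc h; rewrite mulf_neq0 ?expf_neq0. Qed.

Lemma coefKt_wd c (e1 e2 : E) : evalx c r != 0 -> e1.2 != 0 -> e2.2 != 0 ->
  coefK r e1 = coefK r e2 -> coefKt r c e1 = coefKt r c e2.
Proof.
move=> hc h1 h2 h; have := frac_cross (den_neq0 h1) (den_neq0 h2) h.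
move/(congr1 (evalx c)); rewrite !evalxM !evalxX !evalx_lift => h'.
by apply: frac_eq; rewrite ?dent_neq0.
Qed.

Definition Srep (z : K) (e : E) := e.2 != 0 /\ z = coefK r e.
Definition sub (z : K) := exists e, Srep z e.
Definition phi c (z : K) : kt :=
  coefKt r c (epsilon (inhabits ((0 : A), 0%N, (1 : {poly k}))) (Srep z)).

Lemma phiE c (e : E) : evalx c r != 0 -> e.2 != 0 -> phi c (coefK r e) = coefKt r c e.
Proof.
move=> hc he; rewrite /phi.
have [h1 h2] : Srep (coefK r e) (epsilon (inhabits ((0 : A), 0%N, (1 : {poly k}))) (Srep (coefK r e))).
  by apply: epsilon_spec; exists e.
by apply: coefKt_wd.
Qed.

Definition Rel c (z : K) (w : kt) := sub z /\ phi c z = w.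

Lemma RelE c (e : E) : evalx c r != 0 -> e.2 != 0 -> Rel c (coefK r e) (coefKt r c e).
Proof. by move=> hc he; split; [exists e | apply: phiE]. Qed.

Lemma coefK_add (e1 e2 : E) : e1.2 != 0 -> e2.2 != 0 ->
  coefK r e1 + coefK r e2 =
  coefK r (e1.1.1 * (r ^+ e2.1.2 * liftkt n e2.2) + e2.1.1 * (r ^+ e1.1.2 * liftkt n e1.2),
           (e1.1.2 + e2.1.2)%N, e1.2 * e2.2).
Proof.
move=> h1 h2; rewrite /coefK addf_div ?tofrac_eq0 ?den_neq0 // -!tofracM -tofracD /=.
by congr (_ / _%:F); rewrite liftM exprD mulrACA.
Qed.

Lemma evalx_den c (e : E) : evalx c (r ^+ e.1.2 * liftkt n e.2) = evalx c r ^+ e.1.2 * e.2.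
Proof. by rewrite evalxM evalxX evalx_lift. Qed.

Lemma Rel_inv c z w : evalx c r != 0 -> Rel c z w ->
  exists e : E, [/\ e.2 != 0, z = coefK r e & w = coefKt r c e].
Proof. by move=> hc [[e [he ->]] <-]; exists e; split => //; rewrite phiE. Qed.

Section RelC.
Variable c : 'I_n -> k.
Hypothesis hc : evalx c r != 0.

Lemma Rel_add x y w1 w2 : Rel c x w1 -> Rel c y w2 -> Rel c (x + y) (w1 + w2).
Proof.
move=> /(Rel_inv hc) [e1 [h1 -> ->]] /(Rel_inv hc) [e2 [h2 -> ->]].
rewrite coefK_add //.
have -> : coefKt r c e1 + coefKt r c e2 =
  coefKt r c (e1.1.1 * (r ^+ e2.1.2 * liftkt n e2.2) + e2.1.1 * (r ^+ e1.1.2 * liftkt n e1.2),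
           (e1.1.2 + e2.1.2)%N, e1.2 * e2.2).
  rewrite /coefKt addf_div ?tofrac_eq0 ?dent_neq0 // -!tofracM -tofracD /=.
  by rewrite evalxD !evalxM !evalxX !evalx_lift exprD [in RHS]mulrACA.
by apply: RelE => //=; rewrite mulf_neq0.
Qed.

Lemma Rel_mul x y w1 w2 : Rel c x w1 -> Rel c y w2 -> Rel c (x * y) (w1 * w2).
Proof.
move=> /(Rel_inv hc) [e1 [h1 -> ->]] /(Rel_inv hc) [e2 [h2 -> ->]].
have -> : coefK r e1 * coefK r e2 = coefK r (e1.1.1 * e2.1.1, (e1.1.2 + e2.1.2)%N, e1.2 * e2.2).
  rewrite /coefK mulf_div -!tofracM /=.
  by rewrite liftM exprD [in LHS]mulrACA.
have -> : coefKt r c e1 * coefKt r c e2 = coefKt r c (e1.1.1 * e2.1.1, (e1.1.2 + e2.1.2)%N, e1.2 * e2.2).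
  rewrite /coefKt mulf_div -!tofracM /=.
  by rewrite evalxM exprD [in LHS]mulrACA.
by apply: RelE => //=; rewrite mulf_neq0.
Qed.

Lemma Rel_opp x w : Rel c x w -> Rel c (- x) (- w).
Proof.
move=> /(Rel_inv hc) [e [h -> ->]].
have -> : - coefK r e = coefK r (- e.1.1, e.1.2, e.2) by rewrite /coefK /= tofracN mulNr.
have -> : - coefKt r c e = coefKt r c (- e.1.1, e.1.2, e.2).
  by rewrite /coefKt /= evalxN tofracN mulNr.
exact: RelE.
Qed.

Lemma Rel0 : Rel c 0 0.
Proof.
have -> : (0 : K) = coefK r ((0 : A), 0%N, (1 : {poly k})) by rewrite /coefK /= tofrac0 mul0r.
have -> : (0 : kt) = coefKt r c ((0 : A), 0%N, (1 : {poly k})).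
  by rewrite /coefKt /= evalx0 tofrac0 mul0r.
by apply: RelE; rewrite //= oner_eq0.
Qed.

Lemma Rel1 : Rel c 1 1.
Proof.
have -> : (1 : K) = coefK r ((1 : A), 0%N, (1 : {poly k})).
  by rewrite /coefK /= lift1 expr0 mulr1 tofrac1 divr1.
have -> : (1 : kt) = coefKt r c ((1 : A), 0%N, (1 : {poly k})).
  by rewrite /coefKt /= evalx1 expr0 mulr1 tofrac1 divr1.
by apply: RelE; rewrite //= oner_eq0.
Qed.

Lemma Rel_fder x w : Rel c x w -> Rel c (fder x) (fder w).
Proof.
move=> /(Rel_inv hc) [[[p m] q] [/= h -> ->]].
pose D := r ^+ m * liftkt n q.
have hD : D != 0 by rewrite /D mulf_neq0 ?expf_neq0 ?lift_neq0.
pose ed : E := (p^`() * D - p * D^`(), (m + m)%N, q ^+ 2).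
have -> : fder (coefK r (p, m, q)) = coefK r ed.
  have -> : coefK r (p, m, q) = p%:F / D%:F by [].
  rewrite fderE //; rewrite [coefK r ed]/coefK; congr (_ / _%:F).
  rewrite /D /= exprMn -exprM muln2 -addnn !liftktE rmorphXn.
  by [].
have -> : fder (coefKt r c (p, m, q)) = coefKt r c ed.
  have -> : coefKt r c (p, m, q) = (evalx c p)%:F / (evalx c r ^+ m * q)%:F by [].
  rewrite fderE ?mulf_neq0 ?expf_neq0 //; rewrite [coefKt r c ed]/coefKt; congr (_%:F / _%:F).
    have hDe : evalx c D = evalx c r ^+ m * q by rewrite /D evalxM evalxX evalx_lift.
    by rewrite /= evalxB !evalxM !evalx_deriv !evalxM !evalxX !evalx_lift.
  by rewrite /= exprMn -exprM muln2 -addnn.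
by apply: RelE => //=; rewrite expf_neq0.
Qed.

Lemma Rel_kt f : Rel c (kt_to_K n f) f.
Proof.
have h := frac_repr_den f.
have -> : kt_to_K n f = coefK r (liftkt n (repr f).1, 0%N, (repr f).2).
  by rewrite /kt_to_K /coefK /= expr0 mul1r.
have e : f = coefKt r c (liftkt n (repr f).1, 0%N, (repr f).2).
  by rewrite /coefKt /= expr0 mul1r evalx_lift -frac_repr.
have H := @RelE c (liftkt n (repr f).1, 0%N, (repr f).2) hc h.
by rewrite -e in H.
Qed.

End RelC.

End Spec.


Section MU.
Variable k : fieldType.

Definition ext n (A : Type) (f : 'I_n -> A) (a : A) (i : 'I_n.+1) : A :=
  if insub (val i) is Some j then f j else a.

Lemma ext_widen n A (f : 'I_n -> A) a (i : 'I_n) : ext f a (widen_ord (leqnSn n) i) = f i.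
Proof.
rewrite /ext; case: insubP => [j _ hj|]; last by rewrite /= ltn_ord.
by congr f; apply: val_inj; rewrite hj.
Qed.

Lemma ext_max n A (f : 'I_n -> A) a : ext f a ord_max = a.
Proof. by rewrite /ext; case: insubP => [j hj _|//]; rewrite /= ltnn in hj. Qed.

Lemma ord_cases n (i : 'I_n.+1) : (exists j : 'I_n, i = widen_ord (leqnSn n) j) \/ i = ord_max.
Proof.
case: (unliftP ord_max i) => [j ->|->]; last by right.
by left; exists j; apply: val_inj; exact: lift_max.
Qed.

Definition wid n (m : 'X_{1..n.+1}) : 'X_{1..n} :=
  [multinom m (widen_ord (leqnSn n) i) | i < n].

Definition join n (m : 'X_{1..n}) (d : nat) : 'X_{1..n.+1} :=
  [multinom ext m d i | i < n.+1].

Lemma join_eq n (m : 'X_{1..n.+1}) m' d :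
  (m == join m' d) = (wid m == m') && (m ord_max == d).
Proof.
apply/eqP/andP => [->|[/eqP h1 /eqP h2]].
  split; last by rewrite mnmE ext_max.
  by apply/eqP/mnmP => i; rewrite !mnmE ext_widen.
apply/mnmP => i; rewrite mnmE; case: (ord_cases i) => [[j ->]|->].
  by rewrite ext_widen -h1 mnmE.
by rewrite ext_max.
Qed.

Lemma coef_muni n (p : {mpoly k[n.+1]}) d (m' : 'X_{1..n}) :
  ((muni p)`_d)@_m' = p@_(join m' d).
Proof.
have mcs : forall n0 (m0 : 'X_{1..n0}) (r : seq 'X_{1..n.+1}) (F : 'X_{1..n.+1} -> {mpoly k[n0]}),
    (\sum_(i <- r) F i)@_m0 = \sum_(i <- r) (F i)@_m0.
  by move=> n0 m0 r F; apply: (big_morph (mcoeff m0) (@mcoeffD _ _ m0) (@mcoeff0 _ _ m0)).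
rewrite muniE coef_sum mcs [in RHS](mpolyE p) mcs.
apply: eq_bigr => m _.
rewrite coefZ coefXn mcoeffZ.
rewrite mulr_natr mcoeffMn mcoeffZ !mcoeffX join_eq.
rewrite -/(wid m).
rewrite [d == _]eq_sym.
by case: (wid m == m'); case: (m ord_max == d) => /=; rewrite ?mulr0 ?mulr1 ?mul0rn.
Qed.

Lemma meval_muni n (p : {mpoly k[n.+1]}) (v : 'I_n.+1 -> k) :
  p.@[v] = (map_poly (meval (fun i => v (widen_ord (leqnSn n) i))) (muni p)).[v ord_max].
Proof.
rewrite mevalE muniE rmorph_sum horner_sum; apply: eq_bigr => m _ /=.
rewrite map_polyZ map_polyXn hornerZ hornerXn /= mevalZ mevalX big_ord_recr /= mulrA.
by congr (_ * _ * _); apply: eq_bigr => i _; rewrite mnmE.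
Qed.

Hypothesis hchar : [pchar k] =i pred0.

Lemma natr_inj (i j : nat) : i%:R = j%:R :> k -> i = j.
Proof.
have hc := (pcharf0P k).1 hchar.
wlog hij : i j / (i <= j)%N.
  by move=> hw h; case: (leqP i j) => hij; [exact: hw | apply/esym/hw => //; exact: ltnW].
move=> h; have : (j - i)%:R == 0 :> k by rewrite natrB // h subrr.
by rewrite hc subn_eq0 => hji; apply/eqP; rewrite eqn_leq hij hji.
Qed.

Lemma nonroot (q : {poly k}) : q != 0 -> exists x, ~~ root q x.
Proof.
move=> hq; pose rs := [seq i%:R | i <- iota 0 (size q)] : seq k.
have hu : uniq rs by rewrite map_inj_in_uniq ?iota_uniq // => i j _ _; exact: natr_inj.
case: (boolP (all (root q) rs)) => h.
  by have := max_poly_roots hq h hu; rewrite size_map size_iota ltnn.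
by move/allPn: h => [x _ hx]; exists x.
Qed.

Lemma mpoly_nz n (p : {mpoly k[n]}) : p != 0 -> exists v, p.@[v] != 0.
Proof.
elim: n p => [|n IH] p hp.
  have e := nvar0_mpolyC_eq p erefl.
  move: (p@_0) e => c e; subst p.
  by exists (fun _ => 0); rewrite mevalC; rewrite mpolyC_eq0 in hp.
have hu : muni p != 0.
  have : msupp p != [::] by rewrite msupp_eq0.
  case hs: (msupp p) => [|m s] // _.
  have hm : p@_m != 0 by rewrite mcoeff_eq0 negbK hs mem_head.
  apply/negP => /eqP hu0; move: hm.
  have : ((muni p)`_(m ord_max))@_(wid m) = p@_m.
    by rewrite coef_muni; congr (p@__); apply/esym/eqP; rewrite join_eq !eqxx.
  by rewrite hu0 coef0 mcoeff0 => <-; rewrite eqxx.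
have hl : lead_coef (muni p) != 0 by rewrite lead_coef_eq0.
have [v' hv'] := IH _ hl.
pose g := map_poly (meval v') (muni p).
have hg : g != 0.
  apply/negP => /eqP hg0; move: hv'.
  have : g`_(size (muni p)).-1 = (lead_coef (muni p)).@[v'].
    by rewrite /g coef_map_id0 ?meval0 // lead_coefE.
  by rewrite hg0 coef0 => <-; rewrite eqxx.
have [x hx] := nonroot hg.
exists (ext v' x); rewrite meval_muni ext_max.
have -> : map_poly (meval (fun i => ext v' x (widen_ord (leqnSn n) i))) (muni p) = g.
  apply: eq_map_poly => q; apply: meval_eq => i; exact: ext_widen.
exact: hx.
Qed.

End MU.


Lemma size_transfer (R1 R2 : nzRingType) (X : {poly R1}) (Y : {poly R2}) (g : R1 -> R2) :
  g 0 = 0 -> g 1 = 1 -> X \is monic -> (forall j, Y`_j = g X`_j) -> size Y = size X.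
Proof.
move=> g0 g1 hX hY; apply/eqP; rewrite eqn_leq; apply/andP; split.
  by apply/leq_sizeP => j hj; rewrite hY nth_default.
have hX0 : (0 < size X)%N by rewrite size_poly_gt0 monic_neq0.
have hl : Y`_(size X).-1 != 0.
  by rewrite hY -lead_coefE (monicP hX) g1 oner_eq0.
rewrite -(prednK hX0) ltnNge; apply/negP => h.
by move: hl; rewrite nth_default ?eqxx.
Qed.

Section Final.
Variables (k : fieldType) (n : nat) (r : {poly {mpoly k[n]}}).
Hypothesis hr : r != 0.
Local Notation K := {fraction {poly {mpoly k[n]}}}.
Local Notation kt := {fraction {poly k}}.

Definition PRel c (X : {poly K}) (Y : {poly kt}) := forall j, Rel r c X`_j Y`_j.

Section C.
Variable c : 'I_n -> k.
Hypothesis hc : evalx c r != 0.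

Lemma PRel_dX X Y : PRel c X Y -> PRel c (dX (@fder _) X) (dX (@fder _) Y).
Proof.
move=> h j; rewrite !(coef_dX (@fderD _)).
apply: (Rel_add hr hc); last exact: (Rel_fder hr hc (h j)).
by case: (j == 0%N); [exact: (Rel0 hr hc) | exact: h].
Qed.

Lemma PRel_iter i X Y : PRel c X Y -> PRel c (iter i (dX (@fder _)) X) (iter i (dX (@fder _)) Y).
Proof. by move=> h; elim: i => //= i IH; apply: PRel_dX. Qed.

Lemma Rel_det N (M1 : 'M[K]_N) (M2 : 'M[kt]_N) :
  (forall i j, Rel r c (M1 i j) (M2 i j)) -> Rel r c (\det M1) (\det M2).
Proof.
move=> h; rewrite /determinant.
apply: (big_ind2 (Rel r c)); first exact: (Rel0 hr hc).
  by move=> ? ? ? ? ; apply: (Rel_add hr hc).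
move=> s _; apply: (Rel_mul hr hc).
  case: (perm.odd_perm s); rewrite ?expr0 ?expr1; last exact: (Rel1 hr hc).
  exact: (Rel_opp hr hc (Rel1 hr hc)).
apply: (big_ind2 (Rel r c)); first exact: (Rel1 hr hc).
  by move=> ? ? ? ? ; apply: (Rel_mul hr hc).
by move=> i _; apply: h.
Qed.

Lemma Rel_blk P Pc LK L l m N : PRel c P Pc -> PRel c LK L ->
  forall i j, Rel r c (blk (@fder _) P LK l m N i j) (blk (@fder _) Pc L l m N i j).
Proof.
move=> hP hL i j; rewrite /blk.
case: (split_ordP i) => i' ->; rewrite ?col_mxEu ?col_mxEd !mxE; exact: PRel_iter.
Qed.

Lemma PRel_opK s : all (fun e => e.2 != 0) s -> PRel c (opK r s) (opKt r c s).
Proof.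
move=> hs j; rewrite /opK /opKt !coef_Poly.
case: (ltnP j (size s)) => hj.
  rewrite (nth_map ((0 : {poly {mpoly k[n]}}), 0%N, (1 : {poly k}))) //.
  rewrite (nth_map ((0 : {poly {mpoly k[n]}}), 0%N, (1 : {poly k}))) //.
  apply: (RelE hr hc); exact: (allP hs _ (mem_nth _ hj)).
by rewrite !nth_default ?size_map //; exact: (Rel0 hr hc).
Qed.

End C.

Lemma kt0 : kt_to_K n (0 : kt) = 0.
Proof.
rewrite /kt_to_K; have h := frac_repr (0 : kt); have hd := frac_repr_den (0 : kt).
have : (repr (0 : kt)).1 * 1 = 0 * (repr (0 : kt)).2.
  by apply: frac_cross => //; [exact: oner_neq0 | rewrite -h tofrac0 mul0r].
by rewrite mulr1 mul0r => ->; rewrite liftktE rmorph0 tofrac0 mul0r.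
Qed.

Lemma kt1 : kt_to_K n (1 : kt) = 1.
Proof.
rewrite /kt_to_K; have h := frac_repr (1 : kt); have hd := frac_repr_den (1 : kt).
have : (repr (1 : kt)).1 * 1 = 1 * (repr (1 : kt)).2.
  by apply: frac_cross => //; [exact: oner_neq0 | rewrite -h tofrac1 divr1].
rewrite mulr1 mul1r => ->; rewrite divff // tofrac_eq0.
exact: lift_neq0.
Qed.

Lemma PRel_L c (hc : evalx c r != 0) (L : {poly kt}) : PRel c (map_poly (kt_to_K n) L) L.
Proof. by move=> j; rewrite coef_map_id0 ?kt0 //; exact: (Rel_kt hr hc). Qed.

Lemma Rel_nz c (hc : evalx c r != 0) z w : Rel r c z w -> w != 0 -> z != 0.
Proof. by move=> [_ <-]; apply: contra => /eqP ->; rewrite (Rel0 hr hc).2. Qed.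

Lemma sub_nz c (hc : evalx c r != 0) z w : Rel r c z w -> z != 0 ->
  exists e, [/\ e.2 != 0, e.1.1 != 0 & z = coefK r e].
Proof.
move=> [[e [he hz]] _] hz0; exists e; split => //.
by apply: contra hz0 => /eqP hp; rewrite hz /coefK hp tofrac0 mul0r.
Qed.

Lemma Rel_coef_nz a (ha : evalx a r != 0) z w e : Rel r a z w -> z = coefK r e ->
  e.2 != 0 -> evalx a e.1.1 != 0 -> w != 0.
Proof.
move=> [_ <-] -> he hp; rewrite (phiE hr ha he) /coefKt mulf_neq0 // ?invr_eq0 tofrac_eq0 //.
by rewrite mulf_neq0 ?expf_neq0.
Qed.

Hypothesis hchar : [pchar k] =i pred0.

Lemma evalx_nz (f : {poly {mpoly k[n]}}) : f != 0 -> exists a, evalx a f != 0.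
Proof.
move=> hf; have hl : lead_coef f != 0 by rewrite lead_coef_eq0.
have [v hv] := mpoly_nz hchar hl; exists v.
apply/negP => /eqP h0; move: hv.
have : (evalx v f)`_(size f).-1 = (lead_coef f).@[v].
  by rewrite /evalx coef_map_id0 ?meval0 // lead_coefE.
by rewrite h0 coef0 => <-; rewrite eqxx.
Qed.

Theorem main_gen (s : seq ({poly {mpoly k[n]}} * nat * {poly k})) (L : {poly kt}) (c : 'I_n -> k) :
  all (fun e => e.2 != 0) s ->
  opK r s \is monic ->
  L \is monic ->
  evalx c r != 0 ->
  (gcrd_one (@fder k) (opKt r c s) L ->
     gcrd_one (@fder {mpoly k[n]}) (opK r s) (map_poly (@kt_to_K k n) L))
  /\
  (gcrd_one (@fder {mpoly k[n]}) (opK r s) (map_poly (@kt_to_K k n) L) ->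
     exists a : 'I_n -> k, evalx a r != 0 /\
       gcrd_one (@fder k) (opKt r a s) L).
Proof.
move=> hs hPm hLm hc.
set P := opK r s; set LK := map_poly (kt_to_K n) L.
have hsLK : size LK = size L.
  by apply: (size_transfer kt0 kt1 hLm) => j; rewrite coef_map_id0 ?kt0.
have hsPa a : evalx a r != 0 -> size (opKt r a s) = size P.
  move=> ha; apply: (size_transfer (g := phi r a) _ _ hPm).
  - exact: (Rel0 hr ha).2.
  - exact: (Rel1 hr ha).2.
  by move=> j; rewrite (PRel_opK ha hs j).2.
have hP0 : (0 < size P)%N by rewrite size_poly_gt0 monic_neq0.
have hL0 : (0 < size L)%N by rewrite size_poly_gt0 monic_neq0.
set m := (size P).-1; set l := (size L).-1.
have hsP : size P = m.+1 by rewrite /m prednK.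
have hsL : size L = l.+1 by rewrite /l prednK.
have hdet a (ha : evalx a r != 0) :
   Rel r a (\det (blk (@fder _) P LK l m (l + m)))
           (\det (blk (@fder _) (opKt r a s) L l m (l + m))).
  apply: (Rel_det ha); apply: (Rel_blk ha); first exact: (PRel_opK ha hs).
  exact: (PRel_L ha).
have gK : gcrd_one (@fder _) P LK <-> \det (blk (@fder _) P LK l m (l + m)) != 0.
  by apply: gcrd_det; [exact: (@fderD _) | exact: (@fderM _) | exact: hsP | rewrite hsLK].
have gk a (ha : evalx a r != 0) : gcrd_one (@fder _) (opKt r a s) L <->
    \det (blk (@fder _) (opKt r a s) L l m (l + m)) != 0.
  by apply: gcrd_det; [exact: (@fderD _) | exact: (@fderM _) | rewrite hsPa | exact: hsL].
split.
  move=> h1; apply: gK.2; exact: (Rel_nz hc (hdet c hc) ((gk c hc).1 h1)).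
move=> h2; have [e [he hp hde]] := sub_nz hc (hdet c hc) (gK.1 h2).
have [a ha] := evalx_nz (mulf_neq0 hr hp).
rewrite evalxM mulf_eq0 negb_or in ha; case/andP: ha => har hap.
exists a; split => //; apply: (gk a har).2.
exact: (Rel_coef_nz har (hdet a har) hde he hap).
Qed.

End Final.

End Aux.

Theorem mainTheorem11 (k : closedFieldType) (n : nat)
  (hchar : [pchar k] =i pred0)
  (r : {poly {mpoly k[n]}})
  (s : seq ({poly {mpoly k[n]}} * nat * {poly k}))
  (L : {poly {fraction {poly k}}})
  (c : 'I_n -> k) :
  r != 0 ->
  all (fun e => e.2 != 0) s ->
  opK r s \is monic ->
  L \is monic ->
  evalx c r != 0 ->
  (gcrd_one (@fder k) (opKt r c s) L ->
     gcrd_one (@fder {mpoly k[n]}) (opK r s) (map_poly (@kt_to_K k n) L))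
  /\
  (gcrd_one (@fder {mpoly k[n]}) (opK r s) (map_poly (@kt_to_K k n) L) ->
     exists a : 'I_n -> k, evalx a r != 0 /\
       gcrd_one (@fder k) (opKt r a s) L).
Proof.
move=> hr hs hP hL hc.
exact: (Aux.main_gen hr hchar hs hP hL hc).
Qed.
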